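(* Let $\mathcal M=(M,<,+,0,\ldots)$ be a definably complete locally o-minimal expansion of an ordered group. Let $(G,d_G)$ be a definably compact definable metric group, $(X,d_X)$ a definable metric space, and suppose $G$ acts on $X$ by a definable continuous left action. Let $\pi:X\to Q$ be the canonical projection onto the definable quotient space $Q$ of $X$ by $G$. Then (1) $\pi$ is definably closed; and (2) $X$ is definably compact if and only if $Q$ is definably compact.
   Context: ''Definable'' means definable in $\mathcal M$ with parameters. $\mathcal M$ is an expansion of an ordered group with dense order without endpoints; locally o-minimal: for every definable $Y\subseteq M$ and $a\in M$ there is an open interval $I\ni a$ with $Y\cap I$ a finite union of points and open intervals; definably complete: every definable subset of $M$ has sup and inf in $M\cup\{\pm\infty\}$. A definable metric space $(X,d_X)$ is a definable set with a definable $d_X:X\times X\to\{a\ge0\}$ satisfying $d_X(x,y)=0\iff x=y$, symmetry and triangle inequality, topologized by the balls. A definable metric group is a definable metric space whose underlying set is a definable group with multiplication and inversion continuous. A definable topological space (definable set, topology with definable open base) is definably compact if every definable filtered family (any two members contain a common member) of nonempty closed subsets has nonempty intersection. The definable quotient is a definable topological space $(Q,\tau_Q)$ with definable continuous $\pi:X\to Q$ such that every definable continuous map from $X$ to a definable topological space constant on $G$-orbits factors as $\psi\circ\pi$ with $\psi$ definable continuous (concretely: $Q$ a definable set meeting each orbit in one point, $\pi(x)$ the point of $Q$ in $Gx$, and $S\subseteq Q$ open iff $\pi^{-1}(S)$ open). A definable map is definably closed if it maps definable closed sets to closed sets. *)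

(* Defs.v *)
(* An abstract first-order structure on M, presented (as in
   van den Dries, "Tame topology and o-minimal structures") by the family
   Def n of its definable (with parameters) subsets of M^n.  Points of M^n
   are lists of length n. *)
From Stdlib Require Import List Arith.
Import ListNotations.
Set Implicit Arguments.

Record lang (M : Type) := Lang {
  lt : M -> M -> Prop;
  add : M -> M -> M;
  zero : M;
  opp : M -> M;
  Def : nat -> (list M -> Prop) -> Prop
}.

Section Defs.
Variable M : Type.
Variable L : lang M.

Definition le (x y : M) : Prop := lt L x y \/ x = y.

Definition ogroup_axioms : Prop :=
  (forall x, ~ lt L x x) /\
  (forall x y z, lt L x y -> lt L y z -> lt L x z) /\
  (forall x y, lt L x y \/ x = y \/ lt L y x) /\
  (forall x y z, add L x (add L y z) = add L (add L x y) z) /\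
  (forall x, add L (zero L) x = x /\ add L x (zero L) = x) /\
  (forall x, add L (opp L x) x = zero L /\ add L x (opp L x) = zero L) /\
  (forall x y z, lt L x y -> lt L (add L z x) (add L z y) /\ lt L (add L x z) (add L y z)) /\
  (forall x y, lt L x y -> exists z, lt L x z /\ lt L z y) /\
  (forall x, (exists y, lt L y x) /\ (exists y, lt L x y)).

(* Def is a structure on M (Boolean algebras of subsets of M^n, closed under
   products, containing diagonals, closed under projections) expanding
   (M,<,+) and containing all singletons (definability with parameters). *)
Definition structure_axioms : Prop :=
  (forall n A, Def L n A -> forall s, A s -> length s = n) /\
  (forall n, Def L n (fun s => length s = n)) /\
  (forall n A, Def L n A -> Def L n (fun s => length s = n /\ ~ A s)) /\
  (forall n A B, Def L n A -> Def L n B -> Def L n (fun s => A s /\ B s)) /\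
  (forall n m A B, Def L n A -> Def L m B ->
     Def L (n + m) (fun s => A (firstn n s) /\ B (skipn n s))) /\
  (forall n i j, i < n -> j < n ->
     Def L n (fun s => length s = n /\ nth_error s i = nth_error s j)) /\
  (forall n A, Def L (S n) A -> Def L n (fun s => exists a, A (s ++ [a]))) /\
  Def L 2 (fun s => exists x y, s = [x; y] /\ lt L x y) /\
  Def L 3 (fun s => exists x y, s = [x; y; add L x y]) /\
  (forall a, Def L 1 (fun s => s = [a])).

Definition Def1 (Y : M -> Prop) : Prop :=
  Def L 1 (fun s => exists y, s = [y] /\ Y y).

Inductive ext := NInf | Fin (a : M) | PInf.

Definition ext_lt (a b : ext) : Prop :=
  match a, b with
  | NInf, Fin _ | NInf, PInf | Fin _, PInf => True
  | Fin x, Fin y => lt L x y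
  | _, _ => False
  end.
Definition ext_le (a b : ext) : Prop := ext_lt a b \/ a = b.

Definition in_ival (l u : ext) (x : M) : Prop := ext_lt l (Fin x) /\ ext_lt (Fin x) u.

Definition locally_o_minimal : Prop :=
  forall Y, Def1 Y -> forall a, exists l u, in_ival l u a /\
    exists (ps : list M) (ivs : list (ext * ext)),
      forall x, (Y x /\ in_ival l u x) <->
        (In x ps \/ exists p, In p ivs /\ in_ival (fst p) (snd p) x).

Definition is_sup (Y : M -> Prop) (s : ext) : Prop :=
  (forall y, Y y -> ext_le (Fin y) s) /\
  (forall b, (forall y, Y y -> ext_le (Fin y) b) -> ext_le s b).
Definition is_inf (Y : M -> Prop) (s : ext) : Prop :=
  (forall y, Y y -> ext_le s (Fin y)) /\
  (forall b, (forall y, Y y -> ext_le b (Fin y)) -> ext_le b s).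

Definition definably_complete : Prop :=
  forall Y, Def1 Y -> (exists s, is_sup Y s) /\ (exists i, is_inf Y i).

Definition def_map (n : nat) (X : list M -> Prop) (m : nat) (Y : list M -> Prop)
  (f : list M -> list M) : Prop :=
  (forall x, X x -> Y (f x)) /\
  Def L (n + m) (fun s => exists x, X x /\ s = x ++ f x).

Definition def_map2 (n1 : nat) (X1 : list M -> Prop) (n2 : nat) (X2 : list M -> Prop)
  (m : nat) (Y : list M -> Prop) (f : list M -> list M -> list M) : Prop :=
  (forall x y, X1 x -> X2 y -> Y (f x y)) /\
  Def L (n1 + n2 + m) (fun s => exists x y, X1 x /\ X2 y /\ s = x ++ y ++ f x y).

Definition def_metric_space (n : nat) (X : list M -> Prop) (d : list M -> list M -> M) : Prop :=
  Def L n X /\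
  Def L (n + n + 1) (fun s => exists x y, X x /\ X y /\ s = x ++ y ++ [d x y]) /\
  (forall x y, X x -> X y -> le (zero L) (d x y)) /\
  (forall x y, X x -> X y -> (d x y = zero L <-> x = y)) /\
  (forall x y, X x -> X y -> d x y = d y x) /\
  (forall x y z, X x -> X y -> X z -> le (d x z) (add L (d x y) (d y z))).

Definition open_in (X : list M -> Prop) (d : list M -> list M -> M) (U : list M -> Prop) : Prop :=
  (forall x, U x -> X x) /\
  forall x, U x -> exists e, lt L (zero L) e /\
    forall y, X y -> lt L (d x y) e -> U y.

Definition closed_in (X : list M -> Prop) (d : list M -> list M -> M) (C : list M -> Prop) : Prop :=
  (forall x, C x -> X x) /\ open_in X d (fun x => X x /\ ~ C x).

Definition cont1 (X : list M -> Prop) dX (dY : list M -> list M -> M) (f : list M -> list M) : Prop :=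
  forall x, X x -> forall e, lt L (zero L) e -> exists de, lt L (zero L) de /\
    forall x', X x' -> lt L (dX x x') de -> lt L (dY (f x) (f x')) e.

Definition cont2 (X1 : list M -> Prop) d1 (X2 : list M -> Prop) d2
  (dY : list M -> list M -> M) (f : list M -> list M -> list M) : Prop :=
  forall x y, X1 x -> X2 y -> forall e, lt L (zero L) e -> exists de, lt L (zero L) de /\
    forall x' y', X1 x' -> X2 y' -> lt L (d1 x x') de -> lt L (d2 y y') de ->
      lt L (dY (f x y) (f x' y')) e.

Definition def_metric_group (m : nat) (G : list M -> Prop) (dG : list M -> list M -> M)
  (mul : list M -> list M -> list M) (inv : list M -> list M) (e : list M) : Prop :=
  def_metric_space m G dG /\
  G e /\
  def_map2 m G m G m G mul /\ def_map m G m G inv /\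
  (forall x y z, G x -> G y -> G z -> mul x (mul y z) = mul (mul x y) z) /\
  (forall x, G x -> mul e x = x /\ mul x e = x) /\
  (forall x, G x -> mul (inv x) x = e /\ mul x (inv x) = e) /\
  cont2 G dG G dG dG mul /\ cont1 G dG dG inv.

Definition def_cont_action (m : nat) (G : list M -> Prop) dG mul (e : list M)
  (n : nat) (X : list M -> Prop) dX (act : list M -> list M -> list M) : Prop :=
  def_map2 m G n X n X act /\
  cont2 G dG X dX dX act /\
  (forall x, X x -> act e x = x) /\
  (forall g h x, G g -> G h -> X x -> act (mul g h) x = act g (act h x)).

Definition def_family (k n : nat) (T : list M -> Prop) (F : list M -> list M -> Prop) : Prop :=
  Def L k T /\ Def L (k + n) (fun s => exists t x, T t /\ F t x /\ s = t ++ x).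

Definition filtered (T : list M -> Prop) (F : list M -> list M -> Prop) : Prop :=
  (exists t, T t) /\
  forall t1 t2, T t1 -> T t2 -> exists t3, T t3 /\
    forall x, F t3 x -> F t1 x /\ F t2 x.

Definition def_compact (n : nat) (Y : list M -> Prop) (closed : (list M -> Prop) -> Prop) : Prop :=
  forall k T F, def_family k n T F -> filtered T F ->
    (forall t, T t -> closed (F t) /\ exists x, F t x) ->
    exists x, Y x /\ forall t, T t -> F t x.

Definition open_Q (X : list M -> Prop) dX (Q : list M -> Prop) (pi : list M -> list M)
  (S : list M -> Prop) : Prop :=
  (forall q, S q -> Q q) /\ open_in X dX (fun x => X x /\ S (pi x)).

Definition closed_Q (X : list M -> Prop) dX (Q : list M -> Prop) (pi : list M -> list M)
  (C : list M -> Prop) : Prop :=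
  (forall q, C q -> Q q) /\ open_Q X dX Q pi (fun q => Q q /\ ~ C q).

(* (Q, pi) is the definable quotient of X by G (concrete description):
   Q a definable subset of X meeting each orbit in exactly one point,
   pi x the point of Q in G x, Q carries the quotient topology, which has a
   definable open base. *)
Definition def_quotient (G : list M -> Prop) (act : list M -> list M -> list M)
  (n : nat) (X : list M -> Prop) dX (Q : list M -> Prop) (pi : list M -> list M) : Prop :=
  Def L n Q /\
  (forall q, Q q -> X q) /\
  (forall x, X x -> Q (pi x) /\ exists g, G g /\ pi x = act g x) /\
  (forall x q1 q2, X x -> Q q1 -> Q q2 ->
     (exists g, G g /\ q1 = act g x) -> (exists g, G g /\ q2 = act g x) -> q1 = q2) /\
  (exists k T B, def_family k n T B /\
     (forall t, T t -> open_Q X dX Q pi (B t)) /\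
     (forall S, open_Q X dX Q pi S -> forall q, S q ->
        exists t, T t /\ B t q /\ forall q', B t q' -> S q')).

Definition def_closed_map (n : nat) (X : list M -> Prop) dX (Q : list M -> Prop)
  (pi : list M -> list M) : Prop :=
  forall C, Def L n C -> closed_in X dX C ->
    closed_Q X dX Q pi (fun q => exists x, C x /\ pi x = q).

End Defs.

(* Main.v *)
Require Import Defs.
From Stdlib Require Import List Arith Lia.
From Stdlib Require Import FunctionalExtensionality PropExtensionality Classical.
Import ListNotations.

Section Fw.
Variable M : Type.
Variable L : lang M.
Hypothesis HS : structure_axioms L.

Lemma pred_ext (P Q : list M -> Prop) : (forall s, P s <-> Q s) -> P = Q.
Proof. intros H; apply functional_extensionality; intros s; apply propositional_extensionality; apply H. Qed.

Lemma Def_ext n (P Q : list M -> Prop) : Def L n P -> (forall s, P s <-> Q s) -> Def L n Q.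
Proof. intros HP H; rewrite <- (pred_ext _ _ H); exact HP. Qed.

Lemma Def_cast a b (P : list M -> Prop) : Def L a P -> a = b -> Def L b P.
Proof. intros H E; subst; exact H. Qed.

Lemma Def_len n A : Def L n A -> forall s, A s -> length s = n.
Proof. destruct HS as [H _]; eauto. Qed.

Definition DefP n (P : list M -> Prop) := Def L n (fun s => length s = n /\ P s).

Lemma DefP_ext n (P Q : list M -> Prop) : DefP n P -> (forall s, length s = n -> (P s <-> Q s)) -> DefP n Q.
Proof. unfold DefP; intros HP H; eapply Def_ext; [exact HP|]; intros s; split; intros [H1 H2]; split; auto; apply H; auto. Qed.

Lemma Def_DefP n A : Def L n A -> DefP n A.
Proof. intros HA; eapply Def_ext; [exact HA|]; intros s; split; [intros H; split; [eapply Def_len; eauto| auto]| tauto]. Qed.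

Lemma DefP_Def n P (Q : list M -> Prop) : DefP n P -> (forall s, Q s <-> length s = n /\ P s) -> Def L n Q.
Proof. intros HP H; eapply Def_ext; [exact HP|]; intros s; rewrite H; tauto. Qed.

Lemma DefP_and n (P Q : list M -> Prop) : DefP n P -> DefP n Q -> DefP n (fun s => P s /\ Q s).
Proof. destruct HS as (_&_&_&Hi&_). intros HP HQ. pose proof (Hi _ _ _ HP HQ) as H. eapply Def_ext; [exact H|]; intros s; tauto. Qed.

Lemma DefP_not n (P : list M -> Prop) : DefP n P -> DefP n (fun s => ~ P s).
Proof. destruct HS as (_&_&Hc&_). intros HP. pose proof (Hc _ _ HP) as H. eapply Def_ext; [exact H|]; intros s; tauto. Qed.

Lemma DefP_ex1 n (P : list M -> Prop) : DefP (S n) P -> DefP n (fun s => exists a, P (s ++ [a])).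
Proof.
  destruct HS as (_&_&_&_&_&_&Hp&_). intros HP. pose proof (Hp _ _ HP) as H.
  eapply Def_ext; [exact H|]; intros s; split.
  - intros [a [H1 H2]]. rewrite length_app in H1; simpl in H1. split; [lia| eauto].
  - intros [H1 [a H2]]. exists a. rewrite length_app; simpl; split; [lia|auto].
Qed.

Lemma DefP_exblk k : forall n (P : list M -> Prop), DefP (n + k) P ->
  DefP n (fun s => exists u, length u = k /\ P (s ++ u)).
Proof.
  induction k; intros n P HP.
  - rewrite Nat.add_0_r in HP. eapply DefP_ext; [exact HP|]. intros s _; split.
    + intros H; exists []; rewrite app_nil_r; auto.
    + intros [u [Hu H]]. destruct u; [|simpl in Hu; lia]. rewrite app_nil_r in H; auto.
  - rewrite Nat.add_succ_r in HP. apply DefP_ex1 in HP. apply IHk in HP.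
    eapply DefP_ext; [exact HP|]. intros s _; split.
    + intros [u [Hu [a Ha]]]. exists (u ++ [a]). rewrite length_app; simpl; split; [lia|].
      rewrite app_assoc; auto.
    + intros [u [Hu H]]. destruct (exists_last (l:=u)) as [u' [a Ha]].
      { intro E; subst; simpl in Hu; lia. }
      subst u. rewrite length_app in Hu; simpl in Hu. exists u'; split; [lia|]. exists a.
      rewrite <- app_assoc; auto.
Qed.

Lemma Def_bigand N (P : list M -> Prop) (Q : nat -> list M -> Prop) K :
  Def L N P -> (forall j, j < K -> Def L N (Q j)) -> Def L N (fun w => P w /\ forall j, j < K -> Q j w).
Proof.
  induction K; intros HP HQ.
  - eapply Def_ext; [exact HP|]; intros w; split; [intros; split; auto; intros; lia | tauto].
  - destruct HS as (_&_&_&Hi&_).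
    pose proof (Hi _ _ _ (IHK HP (fun j Hj => HQ j ltac:(lia))) (HQ K ltac:(lia))) as H.
    eapply Def_ext; [exact H|]; intros w; split.
    + intros [[H1 H2] H3]; split; auto; intros j Hj. destruct (Nat.eq_dec j K); [subst; auto | apply H2; lia].
    + intros [H1 H2]; split; [split; auto|]; auto.
Qed.

Lemma firstn_app_len (a b : list M) k : length a = k -> firstn k (a ++ b) = a.
Proof. intros <-. rewrite firstn_app, Nat.sub_diag, firstn_all; simpl; apply app_nil_r. Qed.
Lemma skipn_app_len (a b : list M) k : length a = k -> skipn k (a ++ b) = b.
Proof. intros <-. rewrite skipn_app, Nat.sub_diag, skipn_all; simpl; auto. Qed.

Lemma DefP_reindex n k A sigma : Def L k A -> length sigma = k -> (forall i, In i sigma -> i < n) ->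
  DefP n (fun s => A (map (fun i => nth i s (zero L)) sigma)).
Proof.
  intros HA Hlen Hin. destruct HS as (Hl&Hf&Hc&Hi&Hp&Hd&Hpr&_).
  set (W := fun w => (length (firstn n w) = n /\ A (skipn n w)) /\ forall j, j < k ->
     (length w = n + k /\ nth_error w (n+j) = nth_error w (nth j sigma 0))).
  assert (HW : Def L (n+k) W).
  { apply Def_bigand. exact (Hp n k (fun s => length s = n) A (Hf n) HA). intros j Hj. apply Hd. lia.
    assert (In (nth j sigma 0) sigma) as H by (apply nth_In; lia). specialize (Hin _ H). lia. }
  apply Def_DefP in HW. apply DefP_exblk in HW.
  eapply DefP_ext; [exact HW|]. intros s Hs. unfold W. split.
  - intros [u [Hu [[_ H1] H2]]]. rewrite skipn_app_len in H1 by auto.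
    replace (map (fun i => nth i s (zero L)) sigma) with u; auto.
    apply nth_error_ext. intros j. destruct (Nat.lt_ge_cases j k).
    + destruct (H2 j H) as [_ H3]. rewrite nth_error_app2 in H3 by lia.
      assert (Hj : In (nth j sigma 0) sigma) by (apply nth_In; lia). specialize (Hin _ Hj).
      rewrite nth_error_app1 in H3 by lia. replace (n + j - length s) with j in H3 by lia.
      rewrite H3. rewrite nth_error_map. rewrite (nth_error_nth' sigma 0) by lia. simpl.
      apply nth_error_nth'. lia.
    + rewrite (proj2 (nth_error_None u j)) by lia. symmetry. apply nth_error_None.
      rewrite length_map; lia.
  - intros HA'. exists (map (fun i => nth i s (zero L)) sigma). rewrite length_map. split; auto.
    split. + rewrite firstn_app_len, skipn_app_len by auto. auto.
    + intros j Hj. rewrite length_app, length_map. split; [lia|].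
      assert (Hj' : In (nth j sigma 0) sigma) by (apply nth_In; lia). specialize (Hin _ Hj').
      rewrite nth_error_app2 by lia. rewrite nth_error_app1 by lia.
      replace (n + j - length s) with j by lia.
      rewrite nth_error_map. rewrite (nth_error_nth' sigma 0) by lia. simpl.
      symmetry; apply nth_error_nth'. lia.
Qed.

Definition DefF N (f : list M -> list M) k := exists sigma, length sigma = k /\ (forall i, In i sigma -> i < N) /\
  forall s, length s = N -> f s = map (fun i => nth i s (zero L)) sigma.

Lemma DefF_id N : DefF N (fun s => s) N.
Proof.
  exists (seq 0 N). rewrite length_seq. split; auto. split.
  - intros i Hi. apply in_seq in Hi. lia.
  - intros s Hs. apply (nth_ext _ _ (zero L) (zero L)). rewrite length_map, length_seq; auto.
    intros j Hj. symmetry. rewrite (nth_indep (map (fun i => nth i s (zero L)) (seq 0 N)) (n:=j) (zero L) ((fun i => nth i s (zero L)) 0)) by (rewrite length_map, length_seq; lia).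
    rewrite (map_nth (fun i => nth i s (zero L)) (seq 0 N) 0 j). rewrite seq_nth by lia. auto.
Qed.

Lemma DefF_app N f g k1 k2 : DefF N f k1 -> DefF N g k2 -> DefF N (fun s => f s ++ g s) (k1 + k2).
Proof.
  intros [s1 [H1 [H2 H3]]] [s2 [H4 [H5 H6]]]. exists (s1 ++ s2). rewrite length_app. split; [lia|].
  split. - intros i Hi. apply in_app_or in Hi; destruct Hi; auto.
  - intros s Hs. rewrite map_app, H3, H6; auto.
Qed.

Lemma DefF_firstn N f k j : DefF N f k -> j <= k -> DefF N (fun s => firstn j (f s)) j.
Proof.
  intros [s1 [H1 [H2 H3]]] Hj. exists (firstn j s1). rewrite length_firstn. split; [lia|].
  split. - intros i Hi. apply H2. rewrite <- (firstn_skipn j s1). apply in_or_app; auto.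
  - intros s Hs. rewrite H3 by auto. apply firstn_map.
Qed.

Lemma DefF_skipn N f k j : DefF N f k -> j <= k -> DefF N (fun s => skipn j (f s)) (k - j).
Proof.
  intros [s1 [H1 [H2 H3]]] Hj. exists (skipn j s1). rewrite length_skipn. split; [lia|].
  split. - intros i Hi. apply H2. rewrite <- (firstn_skipn j s1). apply in_or_app; auto.
  - intros s Hs. rewrite H3 by auto. apply skipn_map.
Qed.

Lemma DefP_atom N k k' A f : Def L k A -> DefF N f k' -> k' = k -> DefP N (fun s => A (f s)).
Proof.
  intros HA [sg [H1 [H2 H3]]] <-. pose proof (DefP_reindex N k' A sg HA H1 H2) as H.
  eapply DefP_ext; [exact H|]. intros s Hs. rewrite H3; tauto.
Qed.

Lemma Def_point (c : list M) : Def L (length c) (fun s => s = c).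
Proof.
  destruct HS as (_&Hf&_&_&Hp&_&_&_&_&Hs). induction c.
  - eapply Def_ext; [apply (Hf 0)|]. intros s; destruct s; simpl; split; congruence.
  - pose proof (Hp _ _ _ _ (Hs a) IHc) as H. eapply Def_ext; [exact H|].
    intros s; destruct s as [|b s]; simpl.
    + split; [intros [H1 H2]; discriminate | intro E; discriminate].
    + split; [intros [H1 H2]; inversion H1; subst; auto | intro E; inversion E; subst; auto].
Qed.


Lemma DefP_true n : DefP n (fun _ => True).
Proof. destruct HS as (_&Hf&_). eapply Def_ext; [apply (Hf n)|]. intros s; tauto. Qed.

Ltac dfF := first [ apply DefF_id | apply DefF_app; dfF | eapply DefF_firstn; [dfF | lia] | eapply DefF_skipn; [dfF| lia] ].

Lemma Def_fiber_mid a j b A (c : list M) : Def L (a+j+b) A -> length c = j ->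
  Def L (a+b) (fun v => A (firstn a v ++ c ++ skipn a v)).
Proof.
  intros HA Hc.
  assert (HP : DefP ((a+b)+j) (fun w => skipn (a+b) w = c /\
     A (firstn a (firstn (a+b) w) ++ skipn (a+b) w ++ skipn a (firstn (a+b) w)))).
  { apply DefP_and.
    - eapply DefP_atom with (A := fun s => s = c); [apply Def_point| dfF | lia].
    - eapply DefP_atom with (A := A); [exact HA | dfF | lia]. }
  apply DefP_exblk in HP. eapply DefP_Def; [exact HP|]. intros v. split.
  - intros H. assert (Hl : length v = a + b).
    { pose proof (Def_len _ _ HA _ H) as E. rewrite !length_app in E.
      pose proof (f_equal (@length M) (firstn_skipn a v)) as E2. rewrite length_app in E2. lia. }
    split; auto. exists c. split; auto. rewrite firstn_app_len, skipn_app_len by auto. auto.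
  - intros [Hl [u [Hu [H1 H2]]]]. rewrite firstn_app_len, skipn_app_len in * by auto. subst; auto.
Qed.

End Fw.

Ltac dfF := first [ apply DefF_id | apply DefF_app; dfF | eapply DefF_firstn; [dfF | lia] | eapply DefF_skipn; [dfF| lia] ].

Section Main.
Variable M : Type.
Variable L : lang M.
Hypothesis HL : ogroup_axioms L.
Hypothesis HS : structure_axioms L.

Lemma og_irr x : ~ lt L x x. Proof. destruct HL as (H&_); auto. Qed.
Lemma og_tr x y z : lt L x y -> lt L y z -> lt L x z. Proof. destruct HL as (_&H&_); eauto. Qed.
Lemma og_tri x y : lt L x y \/ x = y \/ lt L y x. Proof. destruct HL as (_&_&H&_); eauto. Qed.
Lemma og_assoc x y z : add L x (add L y z) = add L (add L x y) z. Proof. destruct HL as (_&_&_&H&_); eauto. Qed.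
Lemma og_0l x : add L (zero L) x = x. Proof. destruct HL as (_&_&_&_&H&_); apply H. Qed.
Lemma og_0r x : add L x (zero L) = x. Proof. destruct HL as (_&_&_&_&H&_); apply H. Qed.
Lemma og_Nl x : add L (opp L x) x = zero L. Proof. destruct HL as (_&_&_&_&_&H&_); apply H. Qed.
Lemma og_Nr x : add L x (opp L x) = zero L. Proof. destruct HL as (_&_&_&_&_&H&_); apply H. Qed.
Lemma og_ltl a b c : lt L a b -> lt L (add L c a) (add L c b).
Proof. destruct HL as (_&_&_&_&_&_&H&_); intros; apply H; auto. Qed.
Lemma og_pos : exists e, lt L (zero L) e.
Proof. destruct HL as (_&_&_&_&_&_&_&_&H). apply (H (zero L)). Qed.
Lemma og_lelt a b c : le L a b -> lt L b c -> lt L a c.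
Proof. intros [H|H] H2; [eapply og_tr; eauto| subst; auto]. Qed.
Lemma og_sub a d : lt L a d -> lt L (zero L) (add L (opp L a) d) /\ add L a (add L (opp L a) d) = d.
Proof.
  intros H. split.
  - rewrite <- (og_Nl a). apply og_ltl; auto.
  - rewrite og_assoc, og_Nr, og_0l; auto.
Qed.

Lemma ms_self k Y d x : def_metric_space L k Y d -> Y x -> d x x = zero L.
Proof. intros (_&_&_&H&_) Hx. apply (H x x Hx Hx); auto. Qed.

Lemma ms_shrink k Y d x y z dl : def_metric_space L k Y d -> Y x -> Y y -> Y z ->
  lt L (d x y) dl -> lt L (d y z) (add L (opp L (d x y)) dl) -> lt L (d x z) dl.
Proof.
  intros HM Hx Hy Hz H1 H2. destruct HM as (_&_&_&_&_&Htr).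
  eapply og_lelt; [apply (Htr x y z); auto|].
  rewrite <- (proj2 (og_sub _ _ H1)). apply og_ltl; auto.
Qed.

Definition cl (Y : list M -> Prop) (d : list M -> list M -> M) (A : list M -> Prop) g :=
  Y g /\ forall dl, lt L (zero L) dl -> exists g', A g' /\ lt L (d g g') dl.

Lemma cl_closed k Y d A : def_metric_space L k Y d -> (forall g, A g -> Y g) -> closed_in L Y d (cl Y d A).
Proof.
  intros HM HA. split. { intros g [H _]; auto. }
  split. { intros g [H _]; auto. }
  intros g [Hg Hn].
  assert (exists dl, lt L (zero L) dl /\ forall g', A g' -> ~ lt L (d g g') dl) as [dl [Hdl Hno]].
  { apply NNPP; intro C. apply Hn. split; auto. intros dl Hdl. apply NNPP; intro C2. apply C.
    exists dl; split; auto. intros g' Hg' Hlt. apply C2; eauto. }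
  exists dl; split; auto.
  intros y Hy Hgy. split; auto. intros [_ Hcl].
  destruct (og_sub _ _ Hgy) as [Hpos _].
  destruct (Hcl _ Hpos) as [g' [Hg' Hlt]].
  apply (Hno g' Hg'). eapply ms_shrink; eauto.
Qed.

Lemma open_ext (Y : list M -> Prop) d (U V : list M -> Prop) : open_in L Y d U -> (forall x, U x <-> V x) -> open_in L Y d V.
Proof. intros H E. rewrite <- (pred_ext _ _ _ E). auto. Qed.

Lemma app_inj_len (a b a' b' : list M) : length a = length a' -> a ++ b = a' ++ b' -> a = a' /\ b = b'.
Proof.
  intros Hl E. split.
  - rewrite <- (firstn_app_len _ a b (length a)), E by auto. apply firstn_app_len; auto.
  - rewrite <- (skipn_app_len _ a b (length a)), E by auto. apply skipn_app_len; auto.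
Qed.

Lemma split_len (s : list M) a b : length s = a + b -> exists t g, length t = a /\ length g = b /\ s = t ++ g.
Proof.
  intros H. exists (firstn a s), (skipn a s). rewrite length_firstn, length_skipn.
  split; [lia|]. split; [lia|]. symmetry; apply firstn_skipn.
Qed.

Lemma len1 (t : list M) : length t = 1 -> exists a, t = [a].
Proof. destruct t as [|a [|b t]]; simpl; intros; try lia. eauto. Qed.

End Main.

Section Grp.
Variable M : Type.
Variable L : lang M.
Hypothesis HL : ogroup_axioms L.
Hypothesis HS : structure_axioms L.
Variable m : nat.
Variables (G : list M -> Prop) (dG : list M -> list M -> M)
  (mul : list M -> list M -> list M) (inv : list M -> list M) (e : list M).
Hypothesis HG : def_metric_group L m G dG mul inv e.
Hypothesis HGc : def_compact L m G (closed_in L G dG).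
Variables (n : nat) (X : list M -> Prop) (dX : list M -> list M -> M).
Hypothesis HX : def_metric_space L n X dX.
Variable act : list M -> list M -> list M.
Hypothesis Hact : def_cont_action L m G dG mul e n X dX act.
Variables (Q : list M -> Prop) (pi : list M -> list M).
Hypothesis HQ : def_quotient L G act n X dX Q pi.

Lemma HGms : def_metric_space L m G dG. Proof. apply HG. Qed.
Lemma Ge : G e. Proof. apply HG. Qed.
Lemma Gmul g h : G g -> G h -> G (mul g h). Proof. destruct HG as (_&_&[H _]&_); auto. Qed.
Lemma Ginv g : G g -> G (inv g). Proof. destruct HG as (_&_&_&[H _]&_); auto. Qed.
Lemma Ginvl g : G g -> mul (inv g) g = e. Proof. destruct HG as (_&_&_&_&_&_&H&_); intros; apply H; auto. Qed.
Lemma Xact g x : G g -> X x -> X (act g x). Proof. destruct Hact as ([H _]&_); auto. Qed.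
Lemma act_e x : X x -> act e x = x. Proof. destruct Hact as (_&_&H&_); auto. Qed.
Lemma act_mul g h x : G g -> G h -> X x -> act (mul g h) x = act g (act h x). Proof. destruct Hact as (_&_&_&H); auto. Qed.
Lemma act_cont : cont2 L G dG X dX dX act. Proof. apply Hact. Qed.
Lemma QX q : Q q -> X q. Proof. destruct HQ as (_&H&_); auto. Qed.
Lemma Qpi x : X x -> Q (pi x). Proof. destruct HQ as (_&_&H&_); apply H. Qed.
Lemma pi_orb x : X x -> exists g, G g /\ pi x = act g x. Proof. destruct HQ as (_&_&H&_); apply H. Qed.
Lemma Quniq x q1 q2 : X x -> Q q1 -> Q q2 -> (exists g, G g /\ q1 = act g x) -> (exists g, G g /\ q2 = act g x) -> q1 = q2.
Proof. destruct HQ as (_&_&_&H&_); apply H. Qed.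
Lemma Gdef : Def L m G. Proof. apply HGms. Qed.
Lemma Xdef : Def L n X. Proof. apply HX. Qed.
Lemma Qdef : Def L n Q. Proof. apply HQ. Qed.
Lemma Glen g : G g -> length g = m. Proof. intros; eapply Def_len; eauto using Gdef. Qed.
Lemma Xlen x : X x -> length x = n. Proof. intros; eapply Def_len; eauto using Xdef. Qed.

Lemma act_inv g x : G g -> X x -> act (inv g) (act g x) = x.
Proof. intros. rewrite <- act_mul by auto using Ginv. rewrite Ginvl by auto. apply act_e; auto. Qed.

Lemma pi_fix q : Q q -> pi q = q.
Proof.
  intros Hq. pose proof (QX _ Hq) as Hx. eapply Quniq; eauto using Qpi, pi_orb.
  exists e; split; [apply Ge| rewrite act_e; auto].
Qed.

Lemma pi_graph x q : X x -> Q q -> ((exists g, G g /\ q = act g x) <-> q = pi x).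
Proof.
  intros Hx Hq; split.
  - intros H. eapply Quniq; eauto using Qpi, pi_orb.
  - intros ->. apply pi_orb; auto.
Qed.

Lemma pi_act g x : G g -> X x -> pi (act g x) = pi x.
Proof.
  intros Hg Hx. eapply Quniq; eauto using Qpi, pi_orb, Xact.
  destruct (pi_orb _ (Xact _ _ Hg Hx)) as [g' [Hg' E]]. exists (mul g' g).
  split; [apply Gmul; auto|]. rewrite act_mul; auto.
Qed.

Lemma pi_eq_orbit x y : X x -> X y -> pi x = pi y -> exists h, G h /\ act h y = x.
Proof.
  intros Hx Hy E. destruct (pi_orb _ Hx) as [g1 [Hg1 E1]]. destruct (pi_orb _ Hy) as [g2 [Hg2 E2]].
  exists (mul (inv g1) g2). split; [apply Gmul; auto using Ginv|].
  rewrite act_mul by auto using Ginv. rewrite <- E2, <- E, E1. apply act_inv; auto.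
Qed.

Lemma pi_inv x : X x -> exists h, G h /\ x = act h (pi x).
Proof.
  intros Hx. destruct (pi_orb _ Hx) as [g [Hg E]]. exists (inv g); split; auto using Ginv.
  rewrite E, act_inv; auto.
Qed.

Definition GrAct := fun s => exists g x, G g /\ X x /\ s = g ++ x ++ act g x.
Lemma GrAct_def : Def L (m+n+n) GrAct. Proof. destruct Hact as ([_ H]&_); exact H. Qed.
Lemma GrAct_iff g x z : length g = m -> length x = n -> (GrAct (g ++ x ++ z) <-> G g /\ X x /\ z = act g x).
Proof.
  intros Hg Hx; split.
  - intros (g'&x'&Hg'&Hx'&E). apply app_inj_len in E; [|rewrite Hg, Glen; auto]. destruct E as [-> E].
    apply app_inj_len in E; [|rewrite Hx, Xlen; auto]. destruct E as [-> ->]. auto.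
  - intros (H1&H2&->). exists g, x; auto.
Qed.

Definition GrdG := fun s => exists x y, G x /\ G y /\ s = x ++ y ++ [dG x y].
Lemma GrdG_def : Def L (m+m+1) GrdG. Proof. destruct HGms as (_&H&_); exact H. Qed.
Lemma GrdG_iff g g' r : length g = m -> length g' = m -> (GrdG (g ++ g' ++ r) <-> G g /\ G g' /\ r = [dG g g']).
Proof.
  intros Hg Hx; split.
  - intros (g1&x'&Hg'&Hx'&E). apply app_inj_len in E; [|rewrite Hg, Glen; auto]. destruct E as [-> E].
    apply app_inj_len in E; [|rewrite Hx, Glen; auto]. destruct E as [-> ->]. auto.
  - intros (H1&H2&->). exists g, g'; auto.
Qed.

Definition GrdX := fun s => exists x y, X x /\ X y /\ s = x ++ y ++ [dX x y].
Lemma GrdX_def : Def L (n+n+1) GrdX. Proof. destruct HX as (_&H&_); exact H. Qed.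
Lemma GrdX_iff g g' r : length g = n -> length g' = n -> (GrdX (g ++ g' ++ r) <-> X g /\ X g' /\ r = [dX g g']).
Proof.
  intros Hg Hx; split.
  - intros (g1&x'&Hg'&Hx'&E). apply app_inj_len in E; [|rewrite Hg, Xlen; auto]. destruct E as [-> E].
    apply app_inj_len in E; [|rewrite Hx, Xlen; auto]. destruct E as [-> ->]. auto.
  - intros (H1&H2&->). exists g, g'; auto.
Qed.

Definition LT := fun s => exists x y, s = [x; y] /\ lt L x y.
Lemma LT_def : Def L 2 LT. Proof. destruct HS as (_&_&_&_&_&_&_&H&_); exact H. Qed.
Lemma LT_iff a b : LT ([a] ++ [b]) <-> lt L a b.
Proof. split. - intros (x&y&E&H). simpl in E. inversion E; subst; auto. - intros H; exists a, b; auto. Qed.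

Definition FG (T : list M -> Prop) (F : list M -> list M -> Prop) := fun s => exists t x, T t /\ F t x /\ s = t ++ x.
Lemma FG_iff k T F t x : Def L k T -> length t = k -> (FG T F (t ++ x) <-> T t /\ F t x).
Proof.
  intros HT Ht; split.
  - intros (t'&x'&H1&H2&E). apply app_inj_len in E; [|rewrite Ht; symmetry; eapply Def_len; eauto].
    destruct E as [-> ->]; auto.
  - intros [H1 H2]; exists t, x; auto.
Qed.


Ltac lensolve := repeat (rewrite ?length_app, ?length_skipn, ?length_firstn); simpl; lia.
Ltac fs := repeat first [ rewrite firstn_app_len by lensolve | rewrite skipn_app_len by lensolve ].
Ltac fsH H := repeat first [ rewrite firstn_app_len in H by lensolve | rewrite skipn_app_len in H by lensolve ].

Definition T1 := fun t : list M => exists a, t = [a] /\ lt L (zero L) a.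
Definition Z := fun u => LT ([zero L] ++ u).
Lemma Z_def : Def L 1 Z.
Proof.
  pose proof (Def_fiber_mid M L HS 0 1 1 LT [zero L] LT_def eq_refl) as H.
  eapply Def_ext; [exact H|]. intros s; simpl; tauto.
Qed.
Lemma Z_iff a : Z [a] <-> lt L (zero L) a.
Proof. unfold Z. apply LT_iff. Qed.
Lemma Z_T1 t : Z t <-> T1 t.
Proof.
  split.
  - intros (x&y&E&H). destruct t as [|a [|b t]]; simpl in E; inversion E; subst. exists y; auto.
  - intros (a&->&H). apply Z_iff; auto.
Qed.

Lemma GrdXx_def x : X x -> Def L (n+1) (fun u => GrdX (x ++ u)).
Proof.
  intros Hx. pose proof (Def_fiber_mid M L HS 0 n (n+1) GrdX x
    (Def_cast M L (n+n+1) (0+n+(n+1)) GrdX GrdX_def ltac:(lia)) (Xlen _ Hx)) as H.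
  eapply Def_ext; [exact H|]. intros s; simpl; tauto.
Qed.

Definition Aset x (C : list M -> Prop) a g' := G g' /\ exists y, X y /\ lt L (dX x y) a /\ C (act g' y).

Lemma D2 x C : X x -> Def L n C ->
  Def L (1+m) (FG T1 (fun t g => cl M L G dG (Aset x C (hd (zero L) t)) g)).
Proof.
  intros Hx HC.
  pose (P2 := fun w =>
   GrdG (skipn 1 (firstn (1+m) (firstn (1+m+1) w)) ++ firstn m (skipn (1+m+1) w) ++ firstn 1 (skipn m (skipn (1+m+1) w)))
   /\ LT (firstn 1 (skipn m (skipn (1+m+1) w)) ++ skipn (1+m) (firstn (1+m+1) w))
   /\ GrdX (x ++ (firstn n (skipn 1 (skipn m (skipn (1+m+1) w))) ++ firstn 1 (skipn n (skipn 1 (skipn m (skipn (1+m+1) w))))))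
   /\ LT (firstn 1 (skipn n (skipn 1 (skipn m (skipn (1+m+1) w)))) ++ firstn 1 (firstn (1+m) (firstn (1+m+1) w)))
   /\ GrAct (firstn m (skipn (1+m+1) w) ++ firstn n (skipn 1 (skipn m (skipn (1+m+1) w))) ++ skipn 1 (skipn n (skipn 1 (skipn m (skipn (1+m+1) w)))))
   /\ C (skipn 1 (skipn n (skipn 1 (skipn m (skipn (1+m+1) w)))))).
  assert (H2 : DefP M L (1+m+1+(m + (1 + (n + (1 + n))))) P2).
  { unfold P2. repeat apply DefP_and; auto.
    - eapply DefP_atom with (A := GrdG); [exact HS|exact GrdG_def| dfF | lia].
    - eapply DefP_atom with (A := LT); [exact HS|exact LT_def| dfF | lia].
    - eapply DefP_atom with (A := fun u => GrdX (x ++ u)); [exact HS|apply GrdXx_def; auto| dfF | lia].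
    - eapply DefP_atom with (A := LT); [exact HS|exact LT_def| dfF | lia].
    - eapply DefP_atom with (A := GrAct); [exact HS|exact GrAct_def| dfF | lia].
    - eapply DefP_atom with (A := C); [exact HS|exact HC| dfF | lia]. }
  apply DefP_exblk in H2; auto.
  assert (H1 : DefP M L (1+m+1) (fun w => Z (skipn (1+m) w) /\
     ~ exists u, length u = m + (1 + (n + (1 + n))) /\ P2 (w ++ u))).
  { apply DefP_and; auto.
    - eapply DefP_atom with (A := Z); [exact HS|exact Z_def| dfF | lia].
    - apply DefP_not; auto. }
  apply DefP_exblk in H1; auto.
  assert (H0 : DefP M L (1+m) (fun w => Z (firstn 1 w) /\ G (skipn 1 w) /\
     ~ exists v, length v = 1 /\ (Z (skipn (1+m) (w ++ v)) /\
     ~ exists u, length u = m + (1 + (n + (1 + n))) /\ P2 ((w ++ v) ++ u)))).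
  { apply DefP_and; auto.
    - eapply DefP_atom with (A := Z); [exact HS|exact Z_def| dfF | lia].
    - apply DefP_and; auto.
      + eapply DefP_atom with (A := G); [exact HS|exact Gdef| dfF | lia].
      + apply DefP_not; auto. }
  assert (E2 : forall a g dl, G g -> length g = m ->
    (exists u, length u = m + (1 + (n + (1 + n))) /\ P2 ((([a] ++ g) ++ [dl]) ++ u)) <->
    exists g', Aset x C a g' /\ lt L (dG g g') dl).
  { intros a g dl Hg Hgl. unfold P2. split.
    - intros [u [Hu H]]. fsH H.
      destruct H as (Ha&Hb&Hc&Hd&He&Hf).
      apply GrdG_iff in Ha; [|auto| rewrite length_firstn; lia]. destruct Ha as (_&Hg'&Hr1).
      rewrite Hr1 in Hb. apply LT_iff in Hb.
      apply GrdX_iff in Hc; [|apply Xlen; auto| rewrite length_firstn, !length_skipn; lia].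
      destruct Hc as (_&Hy&Hr2). rewrite Hr2 in Hd. simpl firstn in Hd. apply LT_iff in Hd.
      apply GrAct_iff in He; [| rewrite length_firstn; lia| rewrite length_firstn, !length_skipn; lia].
      destruct He as (_&_&Hz). rewrite Hz in Hf.
      eexists; split; [|exact Hb]. split; auto. eexists; split; [exact Hy|]. split; auto.
    - intros [g' [[Hg' [y (Hy&Hxy&Hc)]] Hd]].
      pose proof (Glen _ Hg') as Hl1. pose proof (Xlen _ Hy) as Hl2. pose proof (Xlen _ (Xact _ _ Hg' Hy)) as Hl3.
      exists (g' ++ [dG g g'] ++ y ++ [dX x y] ++ act g' y). split; [lensolve|].
      fs. simpl firstn.
      split; [apply GrdG_iff; auto|].
      split; [apply LT_iff; auto|].
      split; [apply GrdX_iff; auto using Xlen|].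
      split; [apply LT_iff; auto|].
      split; [apply GrAct_iff; auto|]. auto. }
  eapply DefP_Def; [exact H0|]. intros s. split.
  - intros (t&g&Ht&Hcl&->). destruct Ht as (a&->&Ha). destruct Hcl as [Hg Hcl].
    pose proof (Glen _ Hg) as Hgl. split; [lensolve|]. fs. simpl in Hcl.
    split; [apply Z_iff; auto|]. split; auto.
    intros [v [Hv [H3 H4]]]. apply len1 in Hv. destruct Hv as [dl ->]. fsH H3. apply Z_iff in H3.
    apply H4. apply E2; auto.
  - intros [Hl (H3&H4&H5)]. apply split_len in Hl. destruct Hl as (t&g&Ht&Hg&->). fsH H3. fsH H4.
    apply Z_T1 in H3. exists t, g. split; auto. split; auto.
    destruct H3 as (a&->&Ha). simpl hd. split; auto.
    intros dl Hdl. apply E2; auto. apply NNPP. intro Hn. apply H5. exists [dl]. split; auto.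
    fs. split; [apply Z_iff; auto|]. auto.
Qed.

Lemma cl_mono (A B : list M -> Prop) g : (forall h, A h -> B h) -> cl M L G dG A g -> cl M L G dG B g.
Proof. intros H [H1 H2]; split; auto. intros dl Hdl. destruct (H2 dl Hdl) as (g'&Ha&Hl). eauto. Qed.

Lemma Aset_mono x C a1 a2 g : lt L a1 a2 -> Aset x C a1 g -> Aset x C a2 g.
Proof. intros H (H1&y&H2&H3&H4). split; auto. exists y; repeat split; auto. eapply og_tr; eauto. Qed.

Lemma T1_def : Def L 1 T1.
Proof. eapply Def_ext; [exact Z_def|]. apply Z_T1. Qed.

Lemma part1 : def_closed_map L n X dX Q pi.
Proof.
  intros C HC Hcl.
  assert (CX : forall c, C c -> X c) by apply Hcl.
  split. { intros q (x&Hx&<-). apply Qpi; auto. }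
  split. { intros q [H _]; auto. }
  split. { intros x [H _]; auto. }
  intros x (Hx & HQx & Hn).
  apply NNPP; intro Hno.
  assert (Hbad : forall a, lt L (zero L) a -> exists y, X y /\ lt L (dX x y) a /\ exists h, G h /\ C (act h y)).
  { intros a Ha. apply NNPP; intro C2. apply Hno. exists a. split; auto. intros y Hy Hxy.
    split; auto. split; [apply Qpi; auto|]. intros (c&Hc&Hpc). apply C2. exists y. split; auto. split; auto.
    destruct (pi_eq_orbit c y (CX c Hc) Hy Hpc) as (h&Hh&E). exists h; split; auto; rewrite E; auto. }
  destruct (HGc 1 T1 (fun t g => cl M L G dG (Aset x C (hd (zero L) t)) g)) as (g0&Hg0&Hall).
  - split; [apply T1_def| apply D2; auto].
  - split.
    + destruct (og_pos M L HL) as [a Ha]. exists [a], a; auto.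
    + intros t1 t2 (a1&->&Ha1) (a2&->&Ha2). simpl hd.
      destruct (og_tri M L HL a1 a2) as [H|[H|H]].
      * exists [a1]. split; [exists a1; auto|]. intros g Hg. split; auto.
        eapply cl_mono; [|exact Hg]. intros h; apply Aset_mono; auto.
      * subst. exists [a2]. split; [exists a2; auto|]. intros g Hg; auto.
      * exists [a2]. split; [exists a2; auto|]. intros g Hg. split; auto.
        eapply cl_mono; [|exact Hg]. intros h; apply Aset_mono; auto.
  - intros t (a&->&Ha). simpl hd. split.
    + apply (cl_closed M L HL m); [apply HGms|]. intros g [H _]; auto.
    + destruct (Hbad a Ha) as (y&Hy&Hxy&h&Hh&Hc). exists h. split; auto.
      intros dl Hdl. exists h. split; [split; auto; exists y; auto|].
      rewrite (ms_self M L m G dG h HGms Hh). auto.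
  - destruct (classic (C (act g0 x))) as [Hc|Hc].
    + apply Hn. exists (act g0 x). split; auto. apply pi_act; auto.
    + destruct Hcl as [_ [_ Hop]].
      destruct (Hop (act g0 x) (conj (Xact _ _ Hg0 Hx) Hc)) as (r&Hr&Hball).
      destruct (act_cont g0 x Hg0 Hx r Hr) as (de&Hde&Hcont).
      destruct (Hall [de] (ex_intro _ de (conj eq_refl Hde))) as [_ Hcl0]. simpl in Hcl0.
      destruct (Hcl0 de Hde) as (g'&(Hg'&y&Hy&Hxy&Hcy)&Hgg).
      apply (proj2 (Hball (act g' y) (Xact _ _ Hg' Hy) (Hcont g' y Hg' Hy Hgg Hxy))). exact Hcy.
Qed.

Lemma D4 k T F : Def L k T -> Def L (k+n) (FG T F) ->
  Def L (k+n) (FG T (fun t x => X x /\ F t (pi x))).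
Proof.
  intros HT HF.
  pose (P := fun w => X (skipn k (firstn (k+n) w)) /\
     FG T F (firstn k (firstn (k+n) w) ++ firstn n (skipn (k+n) w)) /\
     Q (firstn n (skipn (k+n) w)) /\
     GrAct (skipn n (skipn (k+n) w) ++ skipn k (firstn (k+n) w) ++ firstn n (skipn (k+n) w))).
  assert (H1 : DefP M L (k+n+(n+m)) P).
  { unfold P. repeat apply DefP_and; auto.
    - eapply DefP_atom with (A := X); [exact HS|exact Xdef| dfF | lia].
    - eapply DefP_atom with (A := FG T F); [exact HS|exact HF| dfF | lia].
    - eapply DefP_atom with (A := Q); [exact HS|exact Qdef| dfF | lia].
    - eapply DefP_atom with (A := GrAct); [exact HS|exact GrAct_def| dfF | lia]. }
  apply DefP_exblk in H1; auto.
  eapply DefP_Def; [exact H1|]. intros s. split.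
  - intros (t&x&Ht&[Hx Hf]&->).
    assert (Htl : length t = k) by (eapply Def_len; eauto). pose proof (Xlen _ Hx) as Hxl.
    split; [lensolve|].
    destruct (pi_orb _ Hx) as (g&Hg&E). pose proof (Glen _ Hg) as Hgl.
    exists (pi x ++ g). split; [rewrite length_app, Xlen by (apply QX, Qpi; auto); lia|].
    unfold P. assert (length (pi x) = n) by (apply Xlen, QX, Qpi; auto). fs.
    split; auto. split; [apply (proj2 (FG_iff k T F t (pi x) HT Htl)); auto|]. split; [apply Qpi; auto|].
    apply GrAct_iff; auto.
  - intros [Hl (u&Hu&HP)]. apply split_len in Hl. destruct Hl as (t&x&Ht&Hx&->).
    unfold P in HP. fsH HP. destruct HP as (A1&H2&H3&H4).
    apply GrAct_iff in H4; [|rewrite length_skipn; lia|auto]. destruct H4 as (Hg&_&E).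
    apply (FG_iff k T F t _ HT Ht) in H2. destruct H2 as [Ht' Hf].
    exists t, x. split; auto. split; [split; auto|auto].
    replace (pi x) with (firstn n u); auto. apply pi_graph; eauto.
Qed.

Lemma D5 k T F : Def L k T -> Def L (k+n) (FG T F) -> (forall t x, T t -> F t x -> X x) ->
  Def L (k+n) (FG T (fun t q => exists x, F t x /\ pi x = q)).
Proof.
  intros HT HF HFX.
  pose (P := fun w => Q (skipn k (firstn (k+n) w)) /\
     FG T F (firstn k (firstn (k+n) w) ++ firstn n (skipn (k+n) w)) /\
     GrAct (skipn n (skipn (k+n) w) ++ firstn n (skipn (k+n) w) ++ skipn k (firstn (k+n) w))).
  assert (H1 : DefP M L (k+n+(n+m)) P).
  { unfold P. repeat apply DefP_and; auto.
    - eapply DefP_atom with (A := Q); [exact HS|exact Qdef| dfF | lia].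
    - eapply DefP_atom with (A := FG T F); [exact HS|exact HF| dfF | lia].
    - eapply DefP_atom with (A := GrAct); [exact HS|exact GrAct_def| dfF | lia]. }
  apply DefP_exblk in H1; auto.
  eapply DefP_Def; [exact H1|]. intros s. split.
  - intros (t&q&Ht&(x&Hf&Hpx)&->).
    assert (Htl : length t = k) by (eapply Def_len; eauto).
    pose proof (HFX _ _ Ht Hf) as Hx. pose proof (Xlen _ Hx) as Hxl.
    assert (Hq : Q q) by (rewrite <- Hpx; apply Qpi; auto).
    assert (length q = n) by (apply Xlen, QX; auto).
    split; [lensolve|].
    destruct (pi_orb _ Hx) as (g&Hg&E). pose proof (Glen _ Hg) as Hgl.
    exists (x ++ g). split; [lensolve|].
    unfold P. fs.
    split; auto. split; [apply (proj2 (FG_iff k T F t x HT Htl)); auto|].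
    apply GrAct_iff; auto. split; auto. split; auto. rewrite <- Hpx; auto.
  - intros [Hl (u&Hu&HP)]. apply split_len in Hl. destruct Hl as (t&q&Ht&Hq&->).
    unfold P in HP. fsH HP. destruct HP as (A1&H2&H3).
    apply GrAct_iff in H3; [|rewrite length_skipn; lia|rewrite length_firstn; lia]. destruct H3 as (Hg&Hx&E).
    apply (FG_iff k T F t _ HT Ht) in H2. destruct H2 as [Ht' Hf].
    exists t, q. split; auto. split; auto. exists (firstn n u). split; auto.
    symmetry. apply pi_graph; eauto.
Qed.

Lemma D6 k T F q : Def L k T -> Def L (k+n) (FG T F) -> X q ->
  Def L (k+m) (FG T (fun t g => G g /\ F t (act g q))).
Proof.
  intros HT HF Hq.
  assert (Hq' : Def L (m+n) (fun v => GrAct (firstn m v ++ q ++ skipn m v))).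
  { apply (Def_fiber_mid M L HS m n n GrAct q GrAct_def (Xlen _ Hq)). }
  pose (P := fun w => GrAct (firstn m (skipn k (firstn (k+m) w) ++ skipn (k+m) w) ++ q ++
                             skipn m (skipn k (firstn (k+m) w) ++ skipn (k+m) w)) /\
     FG T F (firstn k (firstn (k+m) w) ++ skipn (k+m) w)).
  assert (H1 : DefP M L (k+m+n) P).
  { unfold P. repeat apply DefP_and; auto.
    - eapply DefP_atom with (A := fun v => GrAct (firstn m v ++ q ++ skipn m v)); [exact HS|exact Hq'| dfF | lia].
    - eapply DefP_atom with (A := FG T F); [exact HS|exact HF| dfF | lia]. }
  apply DefP_exblk in H1; auto.
  eapply DefP_Def; [exact H1|]. intros s. split.
  - intros (t&g&Ht&(Hg&Hf)&->).
    assert (Htl : length t = k) by (eapply Def_len; eauto).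
    pose proof (Glen _ Hg) as Hgl.
    split; [lensolve|].
    exists (act g q). split; [apply Xlen, Xact; auto|].
    assert (length (act g q) = n) by (apply Xlen, Xact; auto).
    unfold P. fs.
    split; [apply GrAct_iff; auto using Xlen|]. apply (proj2 (FG_iff k T F t _ HT Htl)); auto.
  - intros [Hl (u&Hu&HP)]. apply split_len in Hl. destruct Hl as (t&g&Ht&Hg&->).
    unfold P in HP. fsH HP. destruct HP as (A1&H2).
    apply GrAct_iff in A1; auto using Xlen. destruct A1 as (Hg'&_&E).
    apply (FG_iff k T F t _ HT Ht) in H2. destruct H2 as [Ht' Hf]. subst u.
    exists t, g. auto.
Qed.

Lemma S3 (Fc : list M -> Prop) q : closed_in L X dX Fc -> X q ->
  closed_in L G dG (fun g => G g /\ Fc (act g q)).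
Proof.
  intros [HFX [_ Hop]] Hq. split. { intros g [H _]; auto. }
  split. { intros g [H _]; auto. }
  intros g [Hg Hn]. assert (Hn' : ~ Fc (act g q)) by (intro; apply Hn; auto).
  destruct (Hop (act g q) (conj (Xact _ _ Hg Hq) Hn')) as (r&Hr&Hball).
  destruct (act_cont g q Hg Hq r Hr) as (de&Hde&Hcont).
  exists de. split; auto. intros g' Hg' Hd. split; auto. intros [_ Hf].
  assert (Hqq : lt L (dX q q) de) by (rewrite (ms_self M L n X dX q HX Hq); auto).
  apply (proj2 (Hball (act g' q) (Xact _ _ Hg' Hq) (Hcont g' q Hg' Hq Hd Hqq))). exact Hf.
Qed.

Lemma partb : def_compact L n X (closed_in L X dX) -> def_compact L n Q (closed_Q L X dX Q pi).
Proof.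
  intros HXc k T F [HT HF] Hfil Hcl.
  destruct (HXc k T (fun t x => X x /\ F t (pi x))) as (x&Hx&Hall).
  - split; auto. apply D4; auto.
  - destruct Hfil as [[t0 Ht0] Hf]. split; [exists t0; auto|]. intros t1 t2 H1 H2.
    destruct (Hf t1 t2 H1 H2) as (t3&H3&Hsub). exists t3; split; auto.
    intros y [Hy Hf3]. destruct (Hsub _ Hf3). auto.
  - intros t Ht. destruct (Hcl t Ht) as [HclQ [q Hq]]. destruct HclQ as [HFQ [_ Hop]]. split.
    + split. { intros y [Hy _]; auto. }
      eapply open_ext; [exact Hop|]. intros y. split.
      * intros [Hy [_ Hn]]. split; auto. intros [_ Hf]; auto.
      * intros [Hy Hn]. split; auto. split; [apply Qpi; auto|]. intros Hf; apply Hn; auto.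
    + exists q. pose proof (HFQ _ Hq) as HQq. split; [apply QX; auto|]. rewrite pi_fix; auto.
  - exists (pi x). split; [apply Qpi; auto|]. intros t Ht. apply Hall; auto.
Qed.

Lemma partc : def_compact L n Q (closed_Q L X dX Q pi) -> def_compact L n X (closed_in L X dX).
Proof.
  intros HQc k T F [HT HF] Hfil Hcl.
  assert (HFX : forall t x, T t -> F t x -> X x) by (intros t x Ht; apply (Hcl t Ht)).
  destruct Hfil as [[t0 Ht0] Hf].
  destruct (HQc k T (fun t q => exists x, F t x /\ pi x = q)) as (q&Hq&Hallq).
  - split; auto. apply D5; auto.
  - split; [exists t0; auto|]. intros t1 t2 H1 H2.
    destruct (Hf t1 t2 H1 H2) as (t3&H3&Hsub). exists t3; split; auto.
    intros y (x&Hx&<-). destruct (Hsub _ Hx). split; eauto.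
  - intros t Ht. split.
    + apply part1.
      * assert (Htl : length t = k) by (eapply Def_len; eauto).
        pose proof (Def_fiber_mid M L HS 0 k n (FG T F) t HF Htl) as H.
        eapply Def_ext; [exact H|]. intros s; simpl. rewrite (FG_iff k T F t s HT Htl); tauto.
      * apply Hcl; auto.
    + destruct (Hcl t Ht) as [_ [x Hx]]. exists (pi x), x; auto.
  - destruct (HGc k T (fun t g => G g /\ F t (act g q))) as (g&Hg&Hallg).
    + split; auto. apply D6; auto. apply QX; auto.
    + split; [exists t0; auto|]. intros t1 t2 H1 H2.
      destruct (Hf t1 t2 H1 H2) as (t3&H3&Hsub). exists t3; split; auto.
      intros y [Hy Hy2]. destruct (Hsub _ Hy2). auto.
    + intros t Ht. split.
      * apply S3; [apply Hcl; auto| apply QX; auto].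
      * destruct (Hallq t Ht) as (x&Hx&<-). pose proof (HFX _ _ Ht Hx) as HXx.
        destruct (pi_inv x HXx) as (h&Hh&E). exists h. split; auto. rewrite <- E; auto.
    + exists (act g q). split; [apply Xact; auto using QX|]. intros t Ht; apply Hallg; auto.
Qed.

Lemma main_result : def_closed_map L n X dX Q pi /\
  (def_compact L n X (closed_in L X dX) <-> def_compact L n Q (closed_Q L X dX Q pi)).
Proof. split; [apply part1| split; [apply partb| apply partc]]. Qed.

End Grp.

Theorem proposition5p9 (M : Type) (L : lang M)
  (HL : ogroup_axioms L) (HS : structure_axioms L)
  (Hloc : locally_o_minimal L) (Hdc : definably_complete L)
  (m : nat) (G : list M -> Prop) (dG : list M -> list M -> M)
  (mul : list M -> list M -> list M) (inv : list M -> list M) (e : list M)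
  (HG : def_metric_group L m G dG mul inv e)
  (HGc : def_compact L m G (closed_in L G dG))
  (n : nat) (X : list M -> Prop) (dX : list M -> list M -> M)
  (HX : def_metric_space L n X dX)
  (act : list M -> list M -> list M)
  (Hact : def_cont_action L m G dG mul e n X dX act)
  (Q : list M -> Prop) (pi : list M -> list M)
  (HQ : def_quotient L G act n X dX Q pi) :
  def_closed_map L n X dX Q pi /\
  (def_compact L n X (closed_in L X dX) <-> def_compact L n Q (closed_Q L X dX Q pi)).
Proof. eapply main_result; eauto. Qed.
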